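(* Let $\Gamma$ be a countably infinite group acting minimally and continuously on a compact metrizable space $X$ with more than one orbit, let $x_1\in X$ have trivial stabilizer, and let $f:X\setminus\{x_1\}\to\{1,-1\}$ be continuous and not continuously extendable to $X$. Let $\pi_f:X_f\to X$ be the McMahon extension with continuous $\tilde f:X_f\to\{1,-1\}$, and put $X_{f,\pm}=\tilde f^{-1}(\pm1)$ and $X_\pm=f^{-1}(\pm1)$. Then $(X_{f,+},X_{f,-})$ has arbitrarily large finite independence sets if and only if $(X_+,X_-)$ has arbitrarily large finite independence sets.
   Context: McMahon extension: $\Gamma\curvearrowright X_f$ is a minimal continuous action on a compact metrizable space with a $\Gamma$-equivariant continuous surjection $\pi_f:X_f\to X$ such that $\pi_f^{-1}(x)$ is a single point for $x\notin\Gamma x_1$ and two points for $x\in\Gamma x_1$, and $\tilde f$ is the continuous extension to $X_f$ of $f\circ\pi_f$ on $X_f\setminus\pi_f^{-1}(x_1)$ (unique up to conjugacy). A set $M\subseteq\Gamma$ is an independence set for $(A_1,A_2)$ if $\bigcap_{s\in F}s^{-1}A_{\omega(s)}\ne\emptyset$ for every nonempty finite $F\subseteq M$ and every $\omega\in\{1,2\}^F$. *)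

(* Defs.v *)
From HB Require Import structures.
From mathcomp Require Import all_boot all_order all_algebra.
From mathcomp Require Import all_classical all_reals all_analysis.
Set Implicit Arguments. Unset Strict Implicit. Unset Printing Implicit Defensive.
Import Order.TTheory GRing.Theory Num.Theory.
Local Open Scope classical_set_scope.

Section Defs.
Variables (G : groupType).

Definition is_action (X : Type) (act : G -> X -> X) :=
  (forall x, act 1%g x = x) /\ (forall g h x, act (g * h)%g x = act g (act h x)).

Definition cont_action (X : topologicalType) (act : G -> X -> X) :=
  is_action act /\ forall g, continuous (act g).

Definition gorbit (X : Type) (act : G -> X -> X) (x : X) : set X :=
  [set act g x | g in [set: G]].

Definition minimal_action (X : topologicalType) (act : G -> X -> X) :=
  forall x, closure (gorbit act x) = [set: X].

Definition trivial_stabilizer (X : Type) (act : G -> X -> X) (x : X) :=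
  forall g, act g x = x -> g = 1%g.

(* M is an independence set for (A1, A2): for every nonempty finite F ⊆ M and
   every ω : F -> {1,2} (here encoded as w : G -> bool, true ↦ 1, false ↦ 2),
   ⋂_{s ∈ F} s^{-1} A_{ω(s)} ≠ ∅, where x ∈ s^{-1} A iff s·x ∈ A. *)
Definition independence_set (X : Type) (act : G -> X -> X) (A1 A2 : set X)
    (M : set G) :=
  forall F : set G, finite_set F -> F !=set0 -> F `<=` M ->
  forall w : G -> bool,
  exists x : X, forall s, F s -> (if w s then A1 else A2) (act s x).

Definition arb_large_indep (X : Type) (act : G -> X -> X) (A1 A2 : set X) :=
  forall n : nat, exists M : set G,
    [/\ finite_set M, independence_set act A1 A2 M &
        exists h : 'I_n -> G, injective h /\ range h `<=` M].

(* (Xf, actf, pif, ft) is a McMahon extension of (X, act) for x1 and f :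
   X \ {x1} -> {1,-1} (f encoded as f : X -> bool, true ↦ 1, false ↦ -1;
   its value at x1 is irrelevant). *)
Definition McMahon_extension (X Xf : topologicalType) (act : G -> X -> X)
    (x1 : X) (f : X -> bool)
    (actf : G -> Xf -> Xf) (pif : Xf -> X) (ft : Xf -> bool) :=
  [/\ cont_action actf /\ minimal_action actf,
      continuous pif /\ (forall x, exists y, pif y = x),
      (forall g y, pif (actf g y) = act g (pif y)),
      (forall x, ~ gorbit act x1 x -> exists y, pif @^-1` [set x] = [set y]) /\
      (forall x, gorbit act x1 x ->
         exists y1 y2, y1 <> y2 /\ pif @^-1` [set x] = [set y1; y2]) &
      continuous ft /\ (forall y, pif y <> x1 -> ft y = f (pif y))].

End Defs.

(* Main.v *)
Require Import Defs.
From HB Require Import structures.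
From mathcomp Require Import all_boot all_order all_algebra.
From mathcomp Require Import all_classical all_reals all_analysis.
Local Open Scope classical_set_scope.
Lemma near_fin (T : Type) (Y : topologicalType) (y : Y) (F : set T) (P : T -> Y -> Prop) :
  finite_set F -> (forall s, F s -> nbhs y (P s)) -> nbhs y (fun z => forall s, F s -> P s z).
Proof.
move=> /(@finite_seqP {classic T}) [l ->] {F}.
elim: l => [|a l IH] H.
  by apply: filterE => z s.
have Ha : nbhs y (P a) by apply: H; rewrite /= inE eqxx.
have Hl : nbhs y (fun z => forall s, [set` l] s -> P s z).
  by apply: IH => s Hs; apply: H; rewrite /= inE Hs orbT.
apply: filterS (filterI Ha Hl) => z [Pa Pl] s /=; rewrite inE => /orP [/eqP -> //|Hs].
exact: Pl.
Qed.

Theorem lemma3p3 (R : realType) (G : groupType) (X : metricType R)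
  (act : G -> X -> X) (x1 : X) (f : X -> bool)
  (HGcount : countable [set: G]) (HGinf : infinite_set [set: G])
  (HXcpt : compact [set: X])
  (Hact : cont_action act) (Hmin : minimal_action act)
  (Horbits : exists x y : X, ~ gorbit act x y)
  (Hstab : trivial_stabilizer act x1)
  (Hfcont : {within ~` [set x1], continuous f})
  (Hfnoext : ~ exists g : X -> bool,
                 continuous g /\ (forall x, x <> x1 -> g x = f x))
  (Xf : metricType R) (HXfcpt : compact [set: Xf])
  (actf : G -> Xf -> Xf) (pif : Xf -> X) (ft : Xf -> bool)
  (HMc : McMahon_extension act x1 f actf pif ft) :
  arb_large_indep actf (ft @^-1` [set true]) (ft @^-1` [set false]) <->
  arb_large_indep act [set x | x <> x1 /\ f x = true]
                      [set x | x <> x1 /\ f x = false].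
Proof.
case: HMc => [[[Hisf Hcf] Hminf] [Hpic Hpisurj] Hequiv [Hfib1 Hfib2] [Hftc Hftf]].
case: Hact => [[Ha1 HaM] Hac].
have [z0 Hz0] : exists z0, ~ gorbit act x1 z0.
  case: Horbits => x [y Hxy].
  case: (pselect (gorbit act x1 y)) => [[g _ Eg]|Hy]; last by exists y.
  exists x => -[h _ Eh]; apply: Hxy; exists (g * h^-1)%g => //.
  by rewrite -Eg -Eh -HaM -mulgA mulVg mulg1.
have key : forall M, independence_set actf (ft @^-1` [set true]) (ft @^-1` [set false]) M <->
   independence_set act [set x | x <> x1 /\ f x = true] [set x | x <> x1 /\ f x = false] M.
  move=> M; split => HI F fF nF sF w.
  - have [y Hy] := HI F fF nF sF w.
    have Nb : nbhs y (fun z => forall s, F s ->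
        (if w s then ft @^-1` [set true] else ft @^-1` [set false]) (actf s z)).
      apply: near_fin fF _ => s Fs.
      have hc : continuous (ft \o actf s).
        by move=> z; apply: continuous_comp; [apply: Hcf | apply: Hftc].
      have h : nbhs y [set z | ft (actf s z) = ft (actf s y)].
        exact: (hc y [set ft (actf s y)] (discrete_set1 (ft (actf s y)))).
      apply: filterS h => z /= Ez; have := Hy s Fs.
      by case: (w s); rewrite /preimage /= Ez.
    have : closure (gorbit actf (projT1 (cid (Hpisurj z0)))) y by rewrite Hminf.
    case: (cid (Hpisurj z0)) => z' ez' /=.
    case/(_ _ Nb) => _ [[g _ <-] Hg].
    exists (pif (actf g z')) => s Fs.
    have e : pif (actf s (actf g z')) = act (s * g)%g z0 by rewrite !Hequiv ez' HaM.
    have ne : act (s * g)%g z0 <> x1.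
      move=> E; apply: Hz0; exists ((s * g)^-1)%g => //.
      by rewrite -E -HaM mulVg Ha1.
    have E2 : act s (pif (actf g z')) = act (s * g)%g z0 by rewrite -Hequiv e.
    have Hv : ft (actf s (actf g z')) = f (act (s * g)%g z0) by rewrite Hftf e.
    rewrite E2; have := Hg s Fs.
    by case: (w s) => /= Hgs; split => //; rewrite -Hv; exact: Hgs.
  - have [x Hx] := HI F fF nF sF w.
    have [y Hy] := Hpisurj x.
    exists y => s Fs.
    have e : pif (actf s y) = act s x by rewrite Hequiv Hy.
    have := Hx s Fs.
    case: (w s) => /= -[ne fe].
      by change (ft (actf s y) = true); rewrite Hftf e.
    by change (ft (actf s y) = false); rewrite Hftf e.
split => H n; have [M [fM iM hM]] := H n; exists M; split => //.
  by apply/(key M).1.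
by apply/(key M).2.
Qed.
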